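(* Let $q=p^s$ with $p$ prime, $R_T=\mathbb{F}_q[T]$, $P\in R_T$ monic irreducible of degree $d$, and $n,\alpha\in\mathbb{N}$ with $n\ge1$. Let $v_n(\alpha)$ be the number of distinct cyclic subgroups of order $p^n$ of the group $(R_T/(P^{\alpha}))^{\ast}$. Then \[ v_n(\alpha)=\frac{q^{d\left(\alpha-\lceil \alpha/p^n\rceil\right)}-q^{d\left(\alpha-\lceil\alpha/p^{n-1}\rceil\right)}}{p^{n-1}(p-1)} =\frac{q^{d\left(\alpha-\lceil\alpha/p^{n-1}\rceil\right)}\left(q^{d\left(\lceil\alpha/p^{n-1}\rceil-\lceil\alpha/p^{n}\rceil\right)}-1\right)}{p^{n-1}(p-1)}, \] where $\lceil x\rceil$ is the least integer $\geq x$. *)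

(* Defs.v *)
From HB Require Import structures.
From mathcomp Require Import all_boot all_order all_algebra.
Set Implicit Arguments. Unset Strict Implicit. Unset Printing Implicit Defensive.
Import GRing.Theory.
Local Open Scope ring_scope.

(* The quotient ring R_T/(M) (M = P^alpha) is modelled as the
   finite type of residues, i.e. polynomials of size < size M, with
   multiplication modulo M. *)
Section QuotientUnits.
Variable F : finFieldType.

Definition residues (M : {poly F}) := {poly_((size M).-1) F}.

Definition qunit (M : {poly F}) (x : residues M) : bool :=
  [exists y : residues M, ((val x * val y) %% M == 1 %% M)].

(* the cyclic subgroup <x> = { x^k mod M : k >= 0 } (k <= #|R_T/(M)| suffices) *)
Definition qcyc (M : {poly F}) (x : residues M) : {set residues M} :=
  [set y : residues M | [exists k : 'I_(#|residues M|.+1),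
                          val y == (val x ^+ k) %% M]].

Definition num_cyclic_subgroups (M : {poly F}) (m : nat) : nat :=
  #|[set qcyc x | x : residues M & qunit x && (#|qcyc x| == m)%N]|.
End QuotientUnits.

Definition cdiv (a m : nat) : nat := ((a + m.-1) %/ m)%N.

(* Main.v *)
Require Import Defs.
From HB Require Import structures.
From mathcomp Require Import all_boot all_order all_algebra all_fingroup all_solvable all_field.
From mathcomp Require Import zify.
Import GRing.Theory.
Local Open Scope ring_scope.

Lemma cdiv_leq (a m v : nat) : (0 < m)%N -> (cdiv a m <= v)%N = (a <= v * m)%N.
Proof. move=> m0; rewrite /cdiv -ltnS ltn_divLR //; lia. Qed.

Section PolyVal.
Variable F : fieldType.
Variable P : {poly F}.
Hypothesis Pirr : irreducible_poly P.

Lemma P_neq0 : P != 0.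
Proof. by case: Pirr => H _; rewrite -size_poly_gt0 ltnW. Qed.

Lemma notdvd_coprime z : ~~ (P %| z) -> coprimep P z.
Proof. by move=> H; rewrite irreducible_poly_coprime. Qed.

Lemma dvd_pow_mul b v w : ~~ (P %| w) -> (P ^+ b %| P ^+ v * w) = (b <= v)%N.
Proof.
move=> nPw; case: (leqP b v) => bv.
  by rewrite dvdp_mulr // dvdp_exp2l.
apply/negP => H; apply: (negP nPw).
have: P ^+ v * P ^+ (b - v)%N %| P ^+ v * w by rewrite -exprD subnKC // ltnW.
rewrite dvdp_mul2l ?expf_neq0 ?P_neq0 //; apply: dvdp_trans.
have : (0 < b - v)%N by rewrite subn_gt0.
case: (b - v)%N => // k _; by rewrite exprS dvdp_mulr.
Qed.

Lemma val_dec y : y != 0 -> exists v z, y = P ^+ v * z /\ ~~ (P %| z).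
Proof.
have [k] := ubnP (size y); elim: k y => // k IH y sy y0.
case: (boolP (P %| y)) => Py; last by exists 0%N, y; rewrite expr0 mul1r.
have yE := divpK Py.
have q0 : y %/ P != 0 by apply: contra y0 => /eqP q0; rewrite -yE q0 mul0r.
have [|v [z [E nz]]] := IH (y %/ P) _ q0.
  rewrite -ltnS (leq_trans _ sy) // ltnS -{2}yE size_mul // ?P_neq0 //.
  case: Pirr => H _; move: H; case: (size P) => // [[]] //= m _ .
  by rewrite !addnS /= ltnS leq_addr.
exists v.+1, z; split => //; by rewrite -yE E exprS mulrC mulrA.
Qed.

Lemma dvd_pow_pow (a m : nat) y : (0 < m)%N ->
  (P ^+ a %| y ^+ m) = (P ^+ cdiv a m %| y).
Proof.
move=> m0; case: (eqVneq y 0) => [->|y0]; first by rewrite expr0n gtn_eqF // !dvdp0.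
have [v [z [E nz]]] := @val_dec y y0.
have nzm : ~~ (P %| z ^+ m).
  by rewrite -irreducible_poly_coprime // coprimep_pexpr // irreducible_poly_coprime.
by rewrite E exprMn -exprM dvd_pow_mul // dvd_pow_mul // cdiv_leq // mulnC.
Qed.
End PolyVal.
Lemma count_order (gT : finGroupType) (m : nat) :
  #|[set x : gT | #[x]%g == m]| = (#|[set <[x]>%g | x : gT & #[x]%g == m]| * totient m)%N.
Proof.
set Gd := [set x : gT | #[x]%g == m].
have -> : [set <[x]>%g | x : gT & #[x]%g == m] = [set <[x]>%g | x in Gd].
  by apply/setP => C; apply/imsetP/imsetP => [] [x Hx ->]; exists x; rewrite ?inE in Hx *.
rewrite -sum1_card (partition_big_imset (@cycle gT)) /= -sum_nat_const.
apply: eq_bigr => C /imsetP [x]; rewrite inE => /eqP xm ->.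
rewrite sum1dep_card -xm totient_gen; apply: eq_card => y; rewrite !inE /generator.
apply/andP/eqP => [[_ /eqP ->] // | E]; split; last by rewrite E.
by rewrite -xm /order E.
Qed.
Lemma count_ppow (gT : finGroupType) (p n : nat) : prime p -> (0 < n)%N ->
  #|[set x : gT | #[x]%g == (p ^ n)%N]| =
  (#|[set x : gT | (x ^+ (p ^ n) == 1)%g]| - #|[set x : gT | (x ^+ (p ^ n.-1) == 1)%g]|)%N.
Proof.
move=> pp n0.
have p1 : (1 < p)%N by apply: prime_gt1.
set A := [set x : gT | (x ^+ (p ^ n) == 1)%g].
set B := [set x : gT | (x ^+ (p ^ n.-1) == 1)%g].
have BA : B \subset A.
  apply/subsetP => x; rewrite !inE -!order_dvdn => H.
  by apply: dvdn_trans H _; rewrite dvdn_exp2l // leq_pred.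
have -> : [set x : gT | #[x]%g == (p ^ n)%N] = A :\: B.
  apply/setP => x; rewrite !inE -!order_dvdn.
  apply/eqP/andP => [-> | [H1 H2]].
    split; last by [].
    apply/negP => /dvdn_leq; rewrite expn_gt0 prime_gt0 // => /(_ isT).
    by rewrite leq_exp2l // -ltnS prednK // ltnn.
  case/(dvdn_pfactor _ _ pp): H2 => j jn E.
  move: H1; rewrite E; case: (ltnP j n) => jn'.
    by rewrite dvdn_exp2l // -ltnS prednK.
  by move=> _; congr (_ ^ _)%N; apply/eqP; rewrite eqn_leq jn.
by rewrite cardsD (setIidPr BA).
Qed.
HB.instance Definition _ (F : finFieldType) (M : {poly F}) := Finite.on {poly %/ M}.

Section Q.
Variable F : finFieldType.
Variable M : {poly F}.
Hypothesis Mmon : M \is monic.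
Hypothesis Msz : (1 < size M)%N.
Local Notation Q := {poly %/ M}.
Local Notation R := (residues M).

Lemma mkM : mk_monic M = M.
Proof. by rewrite /mk_monic Msz Mmon. Qed.

Lemma valQM (a b : Q) : val (a * b) = (val a * val b) %% M.
Proof. have H := poly_of_qpolyM a b; rewrite [X in Pdiv.CommonRing.rmodp _ X]mkM in H.
by rewrite (Pdiv.IdomainMonic.modpE Mmon) -H. Qed.

Lemma valQX (a : Q) k : val (a ^+ k) = (val a ^+ k) %% M.
Proof. have H := poly_of_qpolyX a k; rewrite [X in Pdiv.CommonRing.rmodp _ X]mkM in H.
by rewrite (Pdiv.IdomainMonic.modpE Mmon) -H. Qed.

Lemma valQ1 : val (1 : Q) = 1.
Proof. by []. Qed.

Lemma sizeQ (a : Q) : (size (val a) < size M)%N.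
Proof. have H := size_mk_monic a; rewrite [in X in (_ < X)%N]mkM in H; exact: H. Qed.

Lemma sizeR (x : R) : (size (val x) < size M)%N.
Proof.
case: x => x /=; rewrite qualifE /= => H.
by rewrite (leq_ltn_trans H) // prednK // ltnW.
Qed.

Definition toQ (x : R) : Q := in_qpoly M (val x).
Lemma val_toQ x : val (toQ x) = val x.
Proof. by apply: in_qpoly_small; rewrite mkM sizeR. Qed.

Lemma toR_proof (a : Q) : val a \is a poly_of_size (size M).-1.
Proof. by rewrite qualifE /= -ltnS prednK ?sizeQ // ltnW. Qed.
Definition toR (a : Q) : R := NPoly (toR_proof a).
Lemma val_toR a : val (toR a) = val a.
Proof. by []. Qed.

Lemma toRK : cancel toR toQ.
Proof. by move=> a; apply: val_inj; rewrite val_toQ. Qed.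
Lemma toQK : cancel toQ toR.
Proof. by move=> x; apply: val_inj; rewrite val_toR val_toQ. Qed.

Lemma mod1M : (1 : {poly F}) %% M = 1.
Proof. by rewrite modp_small // size_polyC oner_eq0. Qed.

Lemma qunitE x : qunit x = (toQ x \is a GRing.unit).
Proof.
apply/existsP/unitrPr => [[y /eqP H] | [b Hb]].
  exists (toQ y); apply: val_inj; by rewrite valQM !val_toQ H mod1M.
exists (toR b); apply/eqP; move/(congr1 val): Hb; rewrite valQM val_toQ val_toR => ->.
by rewrite mod1M.
Qed.

Local Notation U := {unit Q}.
Definition g (u : U) : R := toR (val u).
Lemma g_inj : injective g.
Proof. move=> u v /(congr1 toQ); rewrite !toRK; apply: val_inj. Qed.

Lemma qcycE (u : U) : qcyc (g u) = [set g x | x in <[u]>%g].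
Proof.
apply/setP => y; rewrite inE; apply/existsP/imsetP.
  case=> k /eqP Hk; exists (u ^+ k)%g; first by rewrite mem_cycle.
  apply: val_inj; by rewrite Hk /g FinRing.val_unitX !val_toR valQX.
case=> x /cycleP [i ->] ->.
have ord_le : (i %% #[u]%g < #|R|.+1)%N.
  rewrite ltnS (leq_trans (ltnW (ltn_pmod _ (order_gt0 u)))) //.
  rewrite (leq_trans (max_card (mem (<[u]>%g)))) //.
  rewrite (leq_trans (leq_card _ val_inj)) //.
  exact: (leq_card _ (can_inj toRK)).
exists (Ordinal ord_le) => /=.
rewrite -expg_mod_order /g FinRing.val_unitX; apply/eqP; rewrite valQX //.
Qed.

Lemma card_qcyc (u : U) : #|qcyc (g u)| = #[u]%g.
Proof. by rewrite qcycE (card_imset _ g_inj). Qed.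

Lemma num_cycE m : num_cyclic_subgroups M m =
  #|[set <[u]>%g | u : U & #[u]%g == m]|.
Proof.
rewrite /num_cyclic_subgroups -(card_imset _ (imset_inj g_inj)).
apply: eq_card => Y; apply/imsetP/imsetP.
  case=> x; rewrite inE qunitE => /andP [Ux /eqP cx] ->.
  pose u : U := FinRing.unit _ Ux.
  have gx : x = g u by apply: (can_inj toQK); rewrite /g toRK.
  exists (<[u]>%g); last by rewrite gx qcycE.
  by apply/imsetP; exists u; rewrite // inE -card_qcyc -gx cx.
case=> C /imsetP [u]; rewrite inE => /eqP um -> ->.
exists (g u); last by rewrite qcycE.
by rewrite inE qunitE /g toRK (valP u) card_qcyc um eqxx.
Qed.

Lemma count_unit_pow N : (0 < N)%N ->
  #|[set u : U | (u ^+ N == 1)%g]| = #|[set a : Q | a ^+ N == 1]|.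
Proof.
move=> N0; rewrite -(card_imset _ val_inj); apply: eq_card => a.
apply/imsetP/idP => [[u]|]; rewrite !inE.
  by move=> /eqP H ->; rewrite -FinRing.val_unitX H.
move=> /eqP H.
have Ua : a \is a GRing.unit.
  apply/unitrPr; exists (a ^+ N.-1); by rewrite -exprS prednK.
exists (FinRing.unit _ Ua) => //; rewrite inE; apply/eqP/val_inj.
by rewrite FinRing.val_unitX /= H.
Qed.

Lemma count_one_nil N : [char Q].-nat N ->
  #|[set a : Q | a ^+ N == 1]| = #|[set z : Q | z ^+ N == 0]|.
Proof.
move=> HN; rewrite -[RHS](card_imset _ (addIr 1)); apply: eq_card => a.
apply/idP/imsetP; rewrite ?inE.
  move=> /eqP H; exists (a - 1); last by rewrite subrK.
  rewrite inE; apply/eqP; apply: (addIr 1).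
  have E1 : (1:Q) = 1 ^+ N by rewrite expr1n.
  by rewrite add0r {2}E1 -exprDn_pchar // subrK H.
case=> z; rewrite !inE => /eqP H ->.
by rewrite exprDn_pchar // H expr1n add0r.
Qed.

Lemma nilE N (z : Q) : (z ^+ N == 0) = (M %| val z ^+ N).
Proof.
by rewrite -val_eqE valQX.
Qed.
End Q.

Section Pow.
Variable F : finFieldType.
Variable P : {poly F}.
Variables (d alpha : nat).
Hypothesis Pmon : P \is monic.
Hypothesis Psz : size P = d.+1.
Hypothesis d0 : (0 < d)%N.
Hypothesis a0 : (0 < alpha)%N.
Local Notation M := (P ^+ alpha).

Lemma P0 : P != 0.
Proof. by rewrite -size_poly_gt0 Psz. Qed.

Lemma size_Pexp k : size (P ^+ k) = (d * k).+1.
Proof.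
have := size_exp P k; rewrite Psz /= => <-; rewrite prednK // size_poly_gt0.
by rewrite expf_neq0 // P0.
Qed.

Lemma Mmon : M \is monic.
Proof. exact: monic_exp. Qed.

Lemma Msz : (1 < size M)%N.
Proof. by rewrite size_Pexp ltnS muln_gt0 d0 a0. Qed.

Lemma count_div c : (c <= alpha)%N ->
  #|[set z : {poly %/ M} | P ^+ c %| val z]| = (#|F| ^ (d * (alpha - c)))%N.
Proof.
move=> ca.
set n := (d * (alpha - c))%N.
have hsz (w : {poly_n F}) : (size (P ^+ c * val w)%R < size M)%N.
  case: (eqVneq (val w) 0) => [->|w0]; first by rewrite mulr0 size_poly0 size_Pexp.
  rewrite size_mul ?expf_neq0 ?P0 // size_Pexp !size_Pexp /=.
  have := valP w; rewrite qualifE /= => sw.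
  rewrite ltnS (leq_trans (leq_add (leqnn _) sw)) // /n -mulnDr subnKC //.
pose h (w : {poly_n F}) : {poly %/ M} := in_qpoly M (P ^+ c * val w).
have vh w : val (h w) = P ^+ c * val w.
  by apply: in_qpoly_small; rewrite (@mkM _ _ Mmon Msz) hsz.
have hinj : injective h.
  move=> w1 w2 /(congr1 val); rewrite !vh => /(mulfI (expf_neq0 c P0)).
  exact: val_inj.
rewrite -card_npoly -(card_imset _ hinj); apply: eq_card => z.
rewrite inE; apply/idP/imsetP.
  move=> Hz; set w0 := val z %/ P ^+ c.
  have zE : w0 * P ^+ c = val z by rewrite divpK.
  have sw0 : w0 \is a poly_of_size n.
    rewrite qualifE /=.
    case: (eqVneq w0 0) => [->|w00]; first by rewrite size_poly0.
    have := @sizeQ _ _ Mmon Msz z; rewrite -zE size_mul ?expf_neq0 ?P0 //.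
    rewrite !size_Pexp addnS /= ltnS /n mulnBr => H.
    rewrite leq_subRL; last by rewrite leq_mul2l ca orbT.
    by rewrite addnC.
  exists (NPoly sw0) => //; apply: val_inj; by rewrite vh /= mulrC zE.
case=> w _ ->; by rewrite vh dvdp_mulr.
Qed.
End Pow.

Lemma cdiv_mono a m m' : (0 < m')%N -> (m' <= m)%N -> (cdiv a m <= cdiv a m')%N.
Proof.
move=> m0 mm; rewrite cdiv_leq ?(leq_trans m0 mm) //.
have := leqnn (cdiv a m'); rewrite cdiv_leq // => H.
by rewrite (leq_trans H) // leq_mul2l mm orbT.
Qed.

Lemma cdiv_le a m : (0 < m)%N -> (cdiv a m <= a)%N.
Proof. by move=> m0; rewrite cdiv_leq // leq_pmulr. Qed.

Lemma main_count (F : finFieldType) (p s : nat) (P : {poly F}) (d alpha k : nat) :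
  prime p -> #|F| = (p ^ s)%N -> P \is monic -> irreducible_poly P ->
  size P = d.+1 -> (0 < alpha)%N ->
  #|[set u : {unit {poly %/ P ^+ alpha}} | (u ^+ (p ^ k) == 1)%g]| =
  (#|F| ^ (d * (alpha - cdiv alpha (p ^ k))))%N.
Proof.
move=> pp cF Pm Pirr Psz a0.
have d0 : (0 < d)%N by case: Pirr; rewrite Psz.
have pk0 : (0 < p ^ k)%N by rewrite expn_gt0 prime_gt0.
have Mm : P ^+ alpha \is monic := monic_exp _ Pm.
have Ms := @Msz _ _ _ _ Psz d0 a0.
rewrite (@count_unit_pow _ _ _ pk0) count_one_nil; last first.
  rewrite pnatX (pnatE _ pp); apply/orP; left.
  by rewrite pchar_qpoly (card_finPcharP cF pp).
rewrite -(@count_div _ _ _ _ Pm Psz d0 a0 _ (@cdiv_le alpha _ pk0)).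
apply: eq_card => z; rewrite !inE (@nilE _ _ Mm Ms).
by apply: dvd_pow_pow.
Qed.

Theorem proposition5p1 (F : finFieldType) (p s : nat) (P : {poly F})
    (d n alpha : nat) :
  prime p -> #|F| = (p ^ s)%N ->
  P \is monic -> irreducible_poly P -> size P = d.+1 -> (1 <= n)%N ->
  (num_cyclic_subgroups (P ^+ alpha) (p ^ n))%:R
    = ((#|F| ^ (d * (alpha - cdiv alpha (p ^ n))))%:R
       - (#|F| ^ (d * (alpha - cdiv alpha (p ^ n.-1))))%:R)
      / ((p ^ n.-1 * (p - 1))%:R) :> rat
  /\
  (num_cyclic_subgroups (P ^+ alpha) (p ^ n))%:R
    = (#|F| ^ (d * (alpha - cdiv alpha (p ^ n.-1))))%:R
      * ((#|F| ^ (d * (cdiv alpha (p ^ n.-1) - cdiv alpha (p ^ n))))%:R - 1)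
      / ((p ^ n.-1 * (p - 1))%:R) :> rat.
Proof.
move=> pp cF Pm Pirr Psz n1.
have p1 : (1 < p)%N := prime_gt1 pp.
have D0 : (0 < p ^ n.-1 * (p - 1))%N by rewrite muln_gt0 expn_gt0 prime_gt0 // subn_gt0.
have pn0 : (0 < p ^ n)%N by rewrite expn_gt0 prime_gt0.
have pn10 : (0 < p ^ n.-1)%N by rewrite expn_gt0 prime_gt0.
have [-> | a0] := posnP alpha.
  have cd m : (0 < m)%N -> cdiv 0 m = 0%N.
    by move=> m0; rewrite /cdiv add0n divn_small // ltn_predL.
  rewrite !cd // !subnn !muln0 !expn0 subrr mulr0 !mul0r.
  suff -> : num_cyclic_subgroups (P ^+ 0) (p ^ n) = 0%N by [].
  apply/eqP; rewrite cards_eq0; apply/eqP/setP => Y; rewrite inE.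
  apply/imsetP => [[x]]; rewrite inE => /andP [_ /eqP H] _.
  have : (#|qcyc x| <= 1)%N.
    rewrite (leq_trans (max_card _)) // card_npoly expr0 size_poly1 /=.
    by rewrite expn0.
  rewrite H leqNgt => /negP; apply.
  by rewrite (leq_trans p1) // -{1}(expn1 p) leq_pexp2l // ltnW.
have d0 : (0 < d)%N by case: Pirr; rewrite Psz.
have Mm : P ^+ alpha \is monic := monic_exp _ Pm.
have Ms := @Msz _ _ _ _ Psz d0 a0.
set c1 := cdiv alpha (p ^ n); set c0 := cdiv alpha (p ^ n.-1).
have c10 : (c1 <= c0)%N.
  apply: cdiv_mono => //; apply: leq_pexp2l; [exact: ltnW | exact: leq_pred].
have c0a : (c0 <= alpha)%N by apply: cdiv_le.
set N := num_cyclic_subgroups (P ^+ alpha) (p ^ n).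
have key : (N * (p ^ n.-1 * (p - 1)) =
   #|F| ^ (d * (alpha - c1)) - #|F| ^ (d * (alpha - c0)))%N.
  rewrite /N (@num_cycE _ _ Mm Ms (p ^ n)) [(_ * (p - 1))%N]mulnC subn1.
  rewrite -(totient_pfactor pp n1) -count_order count_ppow //.
  by rewrite !(@main_count _ _ _ _ _ _ _ pp cF Pm Pirr Psz a0).
have le : (#|F| ^ (d * (alpha - c0)) <= #|F| ^ (d * (alpha - c1)))%N.
  rewrite leq_pexp2l ?cF ?expn_gt0 ?prime_gt0 //.
  by rewrite leq_mul2l leq_sub2l // orbT.
have Nq : N%:R = (N * (p ^ n.-1 * (p - 1)))%:R / (p ^ n.-1 * (p - 1))%:R :> rat.
  by rewrite natrM mulfK // Num.Theory.pnatr_eq0 -lt0n.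
have eE : (d * (alpha - c1) = d * (alpha - c0) + d * (c0 - c1))%N.
  by rewrite -mulnDr; congr (d * _)%N; lia.
split; rewrite Nq key natrB //.
by rewrite eE expnD natrM mulrBr mulr1.
Qed.
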